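(* Let $G$ be a cubic graph of order $n\ge 6$ and $A$ a cubic graph of order $4r$ ($r$ a positive integer). Then for any graph $G\circ A^-$, \[c_2(G\circ A^-)-\left\lceil\frac{|V(G\circ A^-)|+2}{4}\right\rceil\ge\left\lfloor\frac{n-2}{4}\right\rfloor.\]
   Context: Let $G$ and $A$ be $3$-regular graphs, let $a$ be a vertex of $A$ and $A^-=A-a$. A graph $G\circ A^-$ is any graph obtained by replacing each vertex $v$ of $G$ by a copy $A^-_v$ of $A^-$ and, for each edge $uv$ of $G$, adding an edge joining a vertex of degree $2$ of $A^-_u$ to a vertex of degree $2$ of $A^-_v$, so that each degree-$2$ vertex of each copy is incident with exactly one added edge (the choices of $a$ and of these edges are arbitrary). For a graph $H=(V,E)$ and $S_0\subseteq V$, the irreversible $2$-threshold conversion process sets $S_t=S_{t-1}\cup\{v: v \text{ has at least } 2 \text{ neighbours in } S_{t-1}\}$ for $t\ge1$; $S_0$ is a $2$-conversion set if $S_t=V$ for some $t$, and $c_2(H)$ is the minimum size of a $2$-conversion set. *)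

(* Defs.v *)
From mathcomp Require Import all_boot.
From Stdlib Require Import ClassicalDescription.
Set Implicit Arguments. Unset Strict Implicit. Unset Printing Implicit Defensive.

Definition simple_graph (T : finType) (e : rel T) : Prop :=
  symmetric e /\ irreflexive e.

Definition nbhd (T : finType) (e : rel T) (x : T) : {set T} := [set y | e x y].

Definition cubic (T : finType) (e : rel T) : Prop :=
  simple_graph e /\ forall x, #|nbhd e x| = 3.

(* Vertices: pairs (v, x) with v in V(G), x in V(A) - a; the copy A^-_v is
   {(v, x) | x <> a}. *)
Notation circV TG a := {p : (TG * _)%type | p.2 != a}.

Definition deg2_in_Aminus (TA : finType) (eA : rel TA) (a x : TA) : bool :=
  (x != a) && (#|[set y | eA x y && (y != a)]| == 2).

(* M is an admissible set of added edges *)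
Definition circ_matching (TG TA : finType) (eG : rel TG) (eA : rel TA) (a : TA)
  (M : rel (circV TG a)) : Prop :=
  symmetric M /\
  (forall p q : circV TG a, M p q ->
     [/\ eG (val p).1 (val q).1, deg2_in_Aminus eA a (val p).2
       & deg2_in_Aminus eA a (val q).2]) /\
  (forall u v : TG, eG u v ->
     #|[set pq : circV TG a * circV TG a |
         [&& M pq.1 pq.2, (val pq.1).1 == u & (val pq.2).1 == v]]| = 1) /\
  (forall p : circV TG a, deg2_in_Aminus eA a (val p).2 ->
     #|[set q | M p q]| = 1).

Definition circE (TG TA : finType) (eA : rel TA) (a : TA) (M : rel (circV TG a))
  : rel (circV TG a) :=
  fun p q => (((val p).1 == (val q).1) && eA (val p).2 (val q).2) || M p q.

Definition conv_step (T : finType) (e : rel T) (S : {set T}) : {set T} :=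
  S :|: [set v | 2 <= #|[set w in S | e v w]|].

Definition conversion_set2 (T : finType) (e : rel T) (S0 : {set T}) : Prop :=
  exists t, iter t (conv_step e) S0 = [set: T].

Definition pbool (P : Prop) : bool :=
  if excluded_middle_informative P then true else false.

Lemma c2_exists (T : finType) (e : rel T) :
  exists n, pbool (exists S, conversion_set2 e S /\ #|S| = n).
Proof.
exists #|[set: T]|; rewrite /pbool.
case: excluded_middle_informative => // H; exfalso; apply: H.
by exists [set: T]; split => //; exists 0.
Qed.

Definition c2 (T : finType) (e : rel T) : nat := ex_minn (c2_exists e).

(* Main.v *)
Require Import Defs.
From mathcomp Require Import all_boot zify.
From Stdlib Require Import ClassicalDescription.

Lemma card_sum (T : finType) (P : pred T) : #|[set y | P y]| = \sum_y (P y : nat).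
Proof.
rewrite -sum1_card big_mkcond; apply: eq_bigr => y _; rewrite inE; by case: (P y).
Qed.

Lemma countA (T : finType) (e : rel T) (tau : T -> nat) (X : {set T}) :
  cubic e -> 0 < #|T| -> (forall x, x \in X -> tau x = 0) ->
  (forall x, x \notin X -> 2 <= #|[set y | e x y && (tau y < tau x)]|) ->
  #|T| < 4 * #|X|.
Proof.
move=> [[esym eirr] e3] T0 X0 Xlt.
have [XT|[x1 x1X]] : X = setT \/ exists x, x \notin X.
  case: (boolP [exists x, x \notin X]) => [/existsP|/existsPn] H; [by right|left].
  by apply/setP => x; rewrite inE; move: (H x); rewrite negbK.
  by rewrite XT cardsT; lia.
pose lt x := \sum_y (e x y && (tau y < tau x) : nat).
pose gt x := \sum_y (e x y && (tau x < tau y) : nat).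
pose eq x := \sum_y (e x y && (tau x == tau y) : nat).
have per x : lt x + gt x + eq x = 3.
  rewrite -(e3 x) /nbhd card_sum /lt /gt /eq -!big_split /=.
  apply: eq_bigr => y _; case: (e x y) => //=.
  by case: ltngtP.
have LG : \sum_x lt x = \sum_x gt x.
  rewrite /lt /gt exchange_big /=; apply: eq_bigr => y _; apply: eq_bigr => x _.
  by rewrite esym.
have tot : \sum_x (2 * lt x + eq x) = 3 * #|T|.
  have : \sum_x (lt x + gt x + eq x) = 3 * #|T|.
    rewrite (eq_bigr (fun _ => 3)) //.
    by rewrite sum_nat_const mulnC.
  rewrite !big_split /= -LG => <-.
  by rewrite (@big1 nat 0 addn _ _ _ (fun _ => 0)) // addn0.
have ltX x : x \notin X -> 2 <= lt x by move=> /Xlt; rewrite card_sum.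
pose x0 := [arg max_(i > x1 | i \notin X) tau i].
have [x0X maxx0] : x0 \notin X /\ forall y, y \notin X -> tau y <= tau x0.
  by rewrite /x0; case: arg_maxnP.
have gt0 : gt x0 = 0.
  apply/eqP; rewrite sum_nat_eq0; apply/forallP => y; apply/implyP => _.
  case: (boolP (y \in X)) => [/X0 ->|/maxx0]; rewrite andbC //.
  by rewrite ltnNge => ->.
have low : 4 * #|~: X| + 1 <= \sum_x (2 * lt x + eq x).
  rewrite (bigD1 x0) //= [X in _ <= X]addnC.
  have := per x0; have := ltX x0 x0X; rewrite gt0 => h1 h2.
  rewrite (cardsD1 x0) inE x0X mulnDr (_ : #|(~: X) :\ x0| = \sum_(x | x != x0) (x \notin X : nat)).
    suff : 4 * \sum_(x | x != x0) (x \notin X : nat) <= \sum_(i | i != x0) (2 * lt i + eq i) by lia.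
    rewrite big_distrr /=; apply: leq_sum => x _; case: (boolP (x \in X)) => //= xX.
    by have := ltX x xX; lia.
  rewrite card_sum; rewrite [RHS]big_mkcond /=; apply: eq_bigr => x _.
  by rewrite !inE; case: (x != x0).
rewrite tot in low.
have := cardsCs X; have := subset_leq_card (subsetT (~: X)); rewrite cardsT; lia.
Qed.

Lemma sum_prod (TG TA : finType) (F : TG -> TA -> nat) :
  \sum_(p : TG * TA) F p.1 p.2 = \sum_v \sum_x F v x.
Proof. by rewrite (pair_big xpredT xpredT). Qed.

Lemma arith n r m : 6 <= n -> 0 < r -> n * r <= m ->
  (n * (4 * r).-1 + 2 + 3) %/ 4 + (n - 2) %/ 4 <= m.
Proof.
move=> h6 r0 hm.
have e4 : n * (4 * r).-1 + n = 4 * (n * r).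
  have : 0 < 4 * r by lia.
  case E: (4 * r) => [|k] // _ /=; nia.
move: e4 hm; generalize (n * (4 * r).-1) (n * r) => A B.
lia.
Qed.

Theorem proposition5p16 (TG TA : finType) (eG : rel TG) (eA : rel TA) (r : nat)
  (a : TA) (M : rel (circV TG a)) :
  cubic eG -> 6 <= #|TG| ->
  cubic eA -> 0 < r -> #|TA| = 4 * r ->
  circ_matching eG eA M ->
  (#|{: circV TG a}| + 2 + 3) %/ 4 + (#|TG| - 2) %/ 4 <= c2 (circE eA M).
Proof.
move=> cG n6 cA r0 TA4 [Msym [Mprop [_ Mdeg]]].
have cardV : #|{: circV TG a}| = #|TG| * (#|TA|.-1).
  have := card_sig (fun p : TG * TA => p.2 != a). move=> ->.
  have -> : #|[pred x : TG * TA | x.2 != a]| = \sum_(p : TG * TA) (p.2 != a : nat).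
    rewrite -card_sum; apply: eq_card => p; by rewrite !inE.
  have /= -> := sum_prod _ _ (fun (v : TG) (x : TA) => (x != a : nat)).
  have e1 : forall v : TG, \sum_x (x != a : nat) = #|TA|.-1.
    move=> v; rewrite -card_sum -(cardsC1 a); apply: eq_card => x; by rewrite !inE.
  rewrite (eq_bigr (fun _ => #|TA|.-1)); last by move=> v _; apply: e1.
  by rewrite sum_nat_const cardT -cardE mulnC.
rewrite /c2; case: ex_minnP => m; rewrite /pbool.
case: excluded_middle_informative => // -[S [[t0 Ht0] cardS]] _ _.
pose eH := circE eA M. pose stp := conv_step eH.
have ex p : exists t, p \in iter t stp S by exists t0; rewrite Ht0 inE.
pose tau p := ex_minn (ex p).
have taumin p t : p \in iter t stp S -> tau p <= t.
  by rewrite /tau; case: ex_minnP => k _ H /H.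
have tauin p : p \in iter (tau p) stp S.
  by rewrite /tau; case: ex_minnP.
have tau0 p : p \in S -> tau p = 0.
  by move=> pS; apply/eqP; rewrite -leqn0; apply: taumin.
have tauP p : p \notin S -> 2 <= #|[set q | eH p q && (tau q < tau p)]|.
  move=> pS; have := tauin p; have := taumin p.
  case: (tau p) => [|k] tm /=; first by rewrite (negbTE pS).
  rewrite {1}/stp /conv_step !inE => /orP[/tm|]; first by rewrite ltnn.
  move/leq_trans; apply; apply: subset_leq_card; apply/subsetP => q.
  by rewrite !inE => /andP[qk ->] /=; rewrite ltnS; apply: taumin.
pose U := [set val p | p in S].
have cardU : #|U| = #|S| by rewrite card_in_imset //; move=> p q _ _; apply: val_inj.
pose Sv v := [set x | (v, x) \in U].
have sumU : #|U| = \sum_v #|Sv v|.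
  have -> : #|U| = \sum_(p : TG * TA) ((p.1, p.2) \in U : nat).
    rewrite -card_sum; apply: eq_card => p; by rewrite !inE -surjective_pairing.
  rewrite (sum_prod _ _ (fun v x => ((v, x) \in U : nat))); apply: eq_bigr => v _.
  by rewrite card_sum.
have bound v : r <= #|Sv v|.
  pose tau' x := if (insub (v, x) : option (circV TG a)) is Some p then tau p else 0.
  have tau'E (p : circV TG a) : (val p).1 = v -> tau' (val p).2 = tau p.
    by case: p => [[v' y] hy] /= E; rewrite /tau' -E -[(v', y)]/(val (exist _ (v', y) hy : circV TG a)) valK.
  have aSv : a \notin Sv v.
    rewrite inE; apply/imsetP => -[p _ E]; by have := valP p; rewrite -E /= eqxx.
  suff : 4 * r < 4 * #|a |: Sv v| by rewrite cardsU1 aSv; lia.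
  rewrite -TA4; apply: (@countA TA eA tau') => //; first by lia.
  - move=> x; rewrite !inE => /orP[/eqP ->|].
      by rewrite /tau' insubN //= eqxx.
    by case/imsetP => p pS E; rewrite (_ : x = (val p).2) ?tau'E ?tau0 // -E.
  - move=> x; rewrite !inE negb_or => /andP[xa xU].
    pose p : circV TG a := exist _ (v, x) xa.
    have pS : p \notin S by apply: contra xU => pS; apply/imsetP; exists p.
    have tx : tau' x = tau p by apply: (tau'E p).
    have tp0 : 0 < tau p.
      by rewrite lt0n; apply: contra pS => /eqP tz; have := tauin p; rewrite tz.
    have [e2 [Gsym Girr]] := (cA.2, cG.1).
    pose Q := [set q | eH p q && (tau q < tau p)].
    pose B := [set q : circV TG a | (val q).1 == v].
    pose Y' := [set y | eA x y && (tau' y < tau' x) && (y != a)].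
    have h1 : #|Q :&: B| <= #|Y'|.
      rewrite -(@card_in_imset _ _ (fun q : circV TG a => (val q).2)).
        apply: subset_leq_card; apply/subsetP => y /imsetP [q].
        rewrite !inE => /andP[/andP[eq tq] /eqP qv] ->.
        rewrite tx tau'E // tq (valP q) andbT.
        move: eq; rewrite /eH /circE /= andbT => /orP[/andP[_ //]|/Mprop[]].
        by rewrite /= qv Girr.
      move=> q1 q2; rewrite !inE => /andP[_ /eqP e1] /andP[_ /eqP e2'] e12.
      apply: val_inj; rewrite [val q1]surjective_pairing [val q2]surjective_pairing.
      by rewrite e1 e2' e12.
    have h2 : Q :\: B \subset [set q | M p q].
      apply/subsetP => q; rewrite !inE => /andP[qv /andP[eq _]].
      by move: eq; rewrite /eH /circE /= eq_sym (negbTE qv).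
    have hQ : 2 <= #|Q :&: B| + #|Q :\: B| by rewrite cardsID; apply: tauP.
    have h3 := subset_leq_card h2.
    pose Y := [set y | eA x y && (tau' y < tau' x)].
    have YY : Y' \subset Y by apply/subsetP => y; rewrite !inE => /andP[-> _].
    have ta : tau' a = 0 by rewrite /tau' insubN //= eqxx.
    case d: (deg2_in_Aminus eA a x).
      have m1 := Mdeg p d.
      have xa' : eA x a.
        apply/negPn/negP => nxa; move: d; rewrite /deg2_in_Aminus xa /=.
        rewrite (_ : [set y | eA x y && (y != a)] = nbhd eA x) ?e2 //.
        apply/setP => y; rewrite !inE; case: (boolP (y == a)) => [/eqP ->|] /=.
          by rewrite (negbTE nxa).
        by rewrite andbT.
      have : a |: Y' \subset Y.
        by rewrite subUset YY andbT sub1set inE xa' ta tx tp0.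
      move/subset_leq_card; rewrite cardsU1 (_ : a \notin Y' = true).
        rewrite -/Y; lia.
      by rewrite inE eqxx !andbF.
    have : [set q | M p q] = set0.
      apply/setP => q; rewrite !inE; apply/negP => /Mprop[_ ]; by rewrite /= d.
    move=> E0; rewrite E0 cards0 in h3.
    have := subset_leq_card YY; rewrite -/Y; lia.
rewrite cardV TA4 -cardS -cardU sumU.
have : \sum_(v : TG) r <= \sum_v #|Sv v| by apply: leq_sum => v _; apply: bound.
rewrite sum_nat_const cardT -cardE => hb.
exact: arith.
Qed.
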